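(* Let $X$ be any topological space. Every prime ideal of $B_1(X)$ is contained in a unique maximal ideal of $B_1(X)$; that is, $B_1(X)$ is a Gelfand ring.
   Context: For a topological space $X$, $B_1(X)$ denotes the commutative ring with unity (pointwise operations) of all Baire one functions $f:X\to\mathbb{R}$, i.e. pointwise limits of sequences of continuous real-valued functions on $X$. *)

(* Defs.v *)
From Stdlib Require Import Reals.
Open Scope R_scope.

Record TopSpace := {
  pt :> Type;
  is_open : (pt -> Prop) -> Prop;
  open_full : is_open (fun _ => True);
  open_union : forall (F : (pt -> Prop) -> Prop),
      (forall U, F U -> is_open U) ->
      is_open (fun x => exists U, F U /\ U x);
  open_inter : forall U V, is_open U -> is_open V ->
      is_open (fun x => U x /\ V x)
}.

Definition continuous_on (X : TopSpace) (f : X -> R) : Prop :=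
  forall D : R -> Prop, open_set D -> is_open X (fun x => D (f x)).

Definition baire_one (X : TopSpace) (f : X -> R) : Prop :=
  exists fn : nat -> X -> R,
    (forall n, continuous_on X (fn n)) /\
    (forall x, Un_cv (fun n => fn n x) (f x)).

Definition b1_ideal (X : TopSpace) (I : (X -> R) -> Prop) : Prop :=
  (forall f, I f -> baire_one X f) /\
  I (fun _ => 0) /\
  (forall f g, I f -> I g -> I (fun x => f x + g x)) /\
  (forall h f, baire_one X h -> I f -> I (fun x => h x * f x)).

Definition b1_proper (X : TopSpace) (I : (X -> R) -> Prop) : Prop :=
  ~ I (fun _ => 1).

Definition b1_prime_ideal (X : TopSpace) (P : (X -> R) -> Prop) : Prop :=
  b1_ideal X P /\ b1_proper X P /\
  (forall f g, baire_one X f -> baire_one X g ->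
     P (fun x => f x * g x) -> P f \/ P g).

Definition b1_maximal_ideal (X : TopSpace) (M : (X -> R) -> Prop) : Prop :=
  b1_ideal X M /\ b1_proper X M /\
  (forall J, b1_ideal X J -> b1_proper X J ->
     (forall f, M f -> J f) -> forall f, J f -> M f).

(* Main.v *)
Require Import Defs.
From Stdlib Require Import Reals Lra Psatz FunctionalExtensionality PropExtensionality.
Open Scope R_scope.

Definition cont2 (phi : R -> R -> R) : Prop :=
  forall a b eps, 0 < eps -> exists del, 0 < del /\
    forall s t, Rabs (s - a) < del -> Rabs (t - b) < del ->
      Rabs (phi s t - phi a b) < eps.

Lemma ball_open a d : open_set (fun s => Rabs (s - a) < d).
Proof.
  intros x Hx.
  assert (Hp : 0 < d - Rabs (x - a)) by lra.
  exists (mkposreal _ Hp). intros y Hy. unfold disc in Hy; simpl in Hy.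
  pose proof (Rabs_triang (y - x) (x - a)) as T.
  replace (y - x + (x - a)) with (y - a) in T by ring. lra.
Qed.

Lemma cont_comp2 (X : TopSpace) phi f g : cont2 phi ->
  continuous_on X f -> continuous_on X g ->
  continuous_on X (fun x => phi (f x) (g x)).
Proof.
  intros Hphi Hf Hg D HD.
  set (F := fun U : X -> Prop => exists a b del, 0 < del /\
     (forall s t, Rabs (s - a) < del -> Rabs (t - b) < del -> D (phi s t)) /\
     U = (fun y => Rabs (f y - a) < del /\ Rabs (g y - b) < del)).
  assert (E : (fun x => D (phi (f x) (g x))) = (fun x => exists U, F U /\ U x)).
  { apply functional_extensionality; intro y; apply propositional_extensionality; split.
    - intro Hy. destruct (HD _ Hy) as [e He].
      destruct (Hphi (f y) (g y) e (cond_pos e)) as [del [Hd Hdel]].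
      exists (fun z => Rabs (f z - f y) < del /\ Rabs (g z - g y) < del). split.
      + exists (f y), (g y), del. split; [exact Hd|]. split; [|reflexivity].
        intros s t Hs Ht. apply He. unfold disc. apply Hdel; assumption.
      + unfold Rminus; rewrite !Rplus_opp_r, Rabs_R0; split; assumption.
    - intros [U [[a [b [del [Hd [HD' EU]]]]] HU]]. subst U. destruct HU. apply HD'; assumption. }
  rewrite E. apply open_union. intros U [a [b [del [Hd [_ EU]]]]]. subst U.
  apply open_inter.
  - apply (Hf (fun s => Rabs (s - a) < del)). apply ball_open.
  - apply (Hg (fun s => Rabs (s - b) < del)). apply ball_open.
Qed.

Lemma b1_comp2 (X : TopSpace) phi f g : cont2 phi ->
  baire_one X f -> baire_one X g -> baire_one X (fun x => phi (f x) (g x)).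
Proof.
  intros Hphi [fn [Hfc Hfl]] [gn [Hgc Hgl]].
  exists (fun n x => phi (fn n x) (gn n x)). split.
  - intro n. apply cont_comp2; auto.
  - intros x eps He. destruct (Hphi (f x) (g x) eps He) as [del [Hd Hdel]].
    destruct (Hfl x del Hd) as [N1 H1]. destruct (Hgl x del Hd) as [N2 H2].
    exists (max N1 N2). intros n Hn. unfold Rdist. apply Hdel.
    + apply H1. lia.
    + apply H2. lia.
Qed.

Lemma cont2_plus : cont2 Rplus.
Proof.
  intros a b eps He. exists (eps/2). split; [lra|]. intros s t Hs Ht.
  replace (s + t - (a + b)) with ((s - a) + (t - b)) by ring.
  pose proof (Rabs_triang (s - a) (t - b)). lra.
Qed.

Lemma cont2_mult : cont2 Rmult.
Proof.
  intros a b eps He.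
  assert (Hq : 0 < eps / (Rabs a + Rabs b + 1)).
  { apply Rdiv_lt_0_compat; [lra|]. pose proof (Rabs_pos a); pose proof (Rabs_pos b); lra. }
  exists (Rmin 1 (eps / (Rabs a + Rabs b + 1))). split.
  { apply Rmin_pos; lra. }
  intros s t Hs Ht.
  set (d := Rmin 1 (eps / (Rabs a + Rabs b + 1))) in *.
  assert (d1 : d <= 1) by apply Rmin_l.
  assert (d2 : d <= eps / (Rabs a + Rabs b + 1)) by apply Rmin_r.
  assert (d3 : d * (Rabs a + Rabs b + 1) <= eps).
  { pose proof (Rabs_pos a); pose proof (Rabs_pos b).
    apply (Rmult_le_compat_r (Rabs a + Rabs b + 1)) in d2; [|lra].
    unfold Rdiv in d2. rewrite Rmult_assoc, Rinv_l in d2; lra. }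
  replace (s * t - a * b) with ((s - a) * (t - b) + a * (t - b) + b * (s - a)) by ring.
  pose proof (Rabs_triang ((s - a) * (t - b) + a * (t - b)) (b * (s - a))).
  pose proof (Rabs_triang ((s - a) * (t - b)) (a * (t - b))).
  rewrite !Rabs_mult in *.
  pose proof (Rabs_pos a); pose proof (Rabs_pos b);
  pose proof (Rabs_pos (s - a)); pose proof (Rabs_pos (t - b)).
  nra.
Qed.

Lemma cont2_un (psi : R -> R) :
  (forall a eps, 0 < eps -> exists del, 0 < del /\
     forall s, Rabs (s - a) < del -> Rabs (psi s - psi a) < eps) ->
  cont2 (fun s _ => psi s).
Proof.
  intros H a b eps He. destruct (H a eps He) as [d [Hd Hd']].
  exists d; split; auto.
Qed.

Lemma Rmax_lip a s c : Rabs (Rmax s c - Rmax a c) <= Rabs (s - a).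
Proof.
  unfold Rmax; destruct (Rle_dec s c); destruct (Rle_dec a c);
  unfold Rabs; repeat destruct Rcase_abs; lra.
Qed.

Lemma cont_shift : forall a eps, 0 < eps -> exists del, 0 < del /\
     forall s, Rabs (s - a) < del ->
       Rabs (Rmax (s - 1/2) 0 - Rmax (a - 1/2) 0) < eps.
Proof.
  intros a eps He. exists eps; split; auto. intros s Hs.
  pose proof (Rmax_lip (a - 1/2) (s - 1/2) 0).
  replace (s - 1/2 - (a - 1/2)) with (s - a) in H by ring. lra.
Qed.

Lemma cont_inv : forall a eps, 0 < eps -> exists del, 0 < del /\
     forall s, Rabs (s - a) < del ->
       Rabs (/ Rmax s (1/16) - / Rmax a (1/16)) < eps.
Proof.
  intros a eps He. exists (eps / 256). split; [lra|]. intros s Hs.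
  pose proof (Rmax_lip a s (1/16)) as L.
  pose proof (Rmax_r s (1/16)). pose proof (Rmax_r a (1/16)).
  set (m1 := Rmax s (1/16)) in *. set (m2 := Rmax a (1/16)) in *.
  replace (/ m1 - / m2) with ((m2 - m1) * (/ m1 * / m2)) by (field; lra).
  rewrite Rabs_mult. rewrite (Rabs_right (/ m1 * / m2)).
  2: { apply Rle_ge, Rmult_le_pos; left; apply Rinv_0_lt_compat; lra. }
  assert (I1 : / m1 <= 16). { replace 16 with (/ (1/16)) by field. apply Rinv_le_contravar; lra. }
  assert (I2 : / m2 <= 16). { replace 16 with (/ (1/16)) by field. apply Rinv_le_contravar; lra. }
  assert (P1 : 0 < / m1) by (apply Rinv_0_lt_compat; lra).
  assert (P2 : 0 < / m2) by (apply Rinv_0_lt_compat; lra).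
  rewrite Rabs_minus_sym in L.
  pose proof (Rabs_pos (m2 - m1)).
  assert (Q : / m1 * / m2 <= 256).
  { apply Rle_trans with (16 * 16); [|lra]. apply Rmult_le_compat; lra. }
  apply Rle_lt_trans with (Rabs (m2 - m1) * 256).
  - apply Rmult_le_compat_l; lra.
  - lra.
Qed.


Lemma ext_in {X : TopSpace} (I : (X -> R) -> Prop) f g :
  I f -> (forall x, f x = g x) -> I g.
Proof.
  intros H E. replace g with f; auto. apply functional_extensionality; auto.
Qed.

Lemma b1_plus X f g : baire_one X f -> baire_one X g -> baire_one X (fun x => f x + g x).
Proof. intros; apply (b1_comp2 X Rplus); auto; apply cont2_plus. Qed.
Lemma b1_mult X f g : baire_one X f -> baire_one X g -> baire_one X (fun x => f x * g x).
Proof. intros; apply (b1_comp2 X Rmult); auto; apply cont2_mult. Qed.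
Lemma b1_shift X f : baire_one X f -> baire_one X (fun x => Rmax (f x - 1/2) 0).
Proof.
  intros. apply (b1_comp2 X (fun s _ => Rmax (s - 1/2) 0) f f); auto.
  apply cont2_un, cont_shift.
Qed.
Lemma b1_inv X f : baire_one X f -> baire_one X (fun x => / Rmax (f x) (1/16)).
Proof.
  intros. apply (b1_comp2 X (fun s _ => / Rmax s (1/16)) f f); auto.
  apply cont2_un, cont_inv.
Qed.
Lemma b1_const X f c : baire_one X f -> baire_one X (fun _ => c).
Proof.
  intros. apply (b1_comp2 X (fun _ _ => c) f f); auto.
  intros a b eps He. exists 1; split; [lra|]. intros. unfold Rminus; rewrite Rplus_opp_r, Rabs_R0; auto.
Qed.

Lemma uv0 a b : a + b = 1 -> Rmax (b - 1/2) 0 * Rmax (a - 1/2) 0 = 0.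
Proof. intros; unfold Rmax; repeat destruct Rle_dec; nra. Qed.

Lemma w_bound a b : a + b = 1 ->
  Rmax (b - 1/2) 0 * Rmax (b - 1/2) 0 + a * a >= 1/16.
Proof.
  intros H. replace a with (1 - b) by lra. unfold Rmax; destruct Rle_dec.
  - nra.
  - pose proof (pow2_ge_0 (b - 3/4)). nra.
Qed.

Lemma inv_w w : w >= 1/16 -> / Rmax w (1/16) * w = 1.
Proof. intros. rewrite Rmax_left by lra. field. lra. Qed.

Definition Mdef (X : TopSpace) (P : (X -> R) -> Prop) (f : X -> R) : Prop :=
  baire_one X f /\ forall h p, baire_one X h -> P p ->
    ~ (forall x, h x * f x + p x = 1).

Lemma M_ideal X P : b1_prime_ideal X P -> b1_ideal X (Mdef X P).
Proof.
  intros [[PB [P0 [PD PM]]] [Pp Ppr]].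
  assert (B0 : baire_one X (fun _ => 0)) by auto.
  split; [intros f [Hf _]; exact Hf|]. split.
  { split; auto. intros h p Hh Hp E. apply Pp. apply (ext_in P p); auto.
    intro x. rewrite <- (E x). ring. }
  split.
  - intros f g [Bf Mf] [Bg Mg]. split; [apply b1_plus; auto|].
    intros h p Bh Hp E.
    set (a := fun x => h x * f x).
    set (b := fun x => h x * g x + p x).
    assert (Ba : baire_one X a) by (apply b1_mult; auto).
    assert (Bb : baire_one X b) by (apply b1_plus; [apply b1_mult|]; auto).
    assert (Eab : forall x, a x + b x = 1).
    { intro x. unfold a, b. rewrite <- (E x). ring. }
    set (u := fun x => Rmax (b x - 1/2) 0).
    set (v := fun x => Rmax (a x - 1/2) 0).
    assert (Bu : baire_one X u) by (apply b1_shift; auto).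
    assert (Bv : baire_one X v) by (apply b1_shift; auto).
    assert (Puv : P (fun x => u x * v x)).
    { apply (ext_in P (fun _ => 0)); auto. intro x. unfold u, v. rewrite uv0; auto. }
    destruct (Ppr u v Bu Bv Puv) as [Pu | Pv].
    + set (w := fun x => u x * u x + a x * a x).
      assert (Bw : baire_one X w) by (apply b1_plus; apply b1_mult; auto).
      set (wi := fun x => / Rmax (w x) (1/16)).
      assert (Bwi : baire_one X wi) by (apply b1_inv; auto).
      apply (Mf (fun x => wi x * (h x * a x)) (fun x => wi x * (u x * u x))).
      * apply b1_mult; auto. apply b1_mult; auto.
      * apply PM; auto.
      * intro x. transitivity (wi x * w x).
        { unfold w, a. ring. }
        apply inv_w. unfold w, u. apply w_bound. apply Eab.
    + set (w := fun x => v x * v x + b x * b x).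
      assert (Bw : baire_one X w) by (apply b1_plus; apply b1_mult; auto).
      set (wi := fun x => / Rmax (w x) (1/16)).
      assert (Bwi : baire_one X wi) by (apply b1_inv; auto).
      apply (Mg (fun x => wi x * (h x * b x)) (fun x => wi x * (v x * v x + b x * p x))).
      * apply b1_mult; auto. apply b1_mult; auto.
      * apply PM; auto.
      * intro x. transitivity (wi x * w x).
        { unfold w, b. ring. }
        apply inv_w. unfold w, v. apply w_bound. rewrite Rplus_comm. apply Eab.
  - intros k f Bk [Bf Mf]. split; [apply b1_mult; auto|].
    intros h p Bh Hp E. apply (Mf (fun x => h x * k x) p); [apply b1_mult; auto|auto|].
    intro x. rewrite <- (E x). ring.
Qed.

Theorem theorem2p17 (X : TopSpace) (P : (X -> R) -> Prop) :
  b1_prime_ideal X P ->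
  exists M, b1_maximal_ideal X M /\ (forall f, P f -> M f) /\
    (forall M', b1_maximal_ideal X M' -> (forall f, P f -> M' f) ->
       forall f, M' f <-> M f).
Proof.
  intros HP. pose proof (M_ideal X P HP) as MI.
  destruct HP as [[PB [P0 [PD PM]]] [Pp Ppr]].
  assert (PsubM : forall f, P f -> Mdef X P f).
  { intros f Hf. split; auto. intros h p Bh Hp E. apply Pp.
    apply (ext_in P (fun x => h x * f x + p x)); auto. }
  assert (Mpr : b1_proper X (Mdef X P)).
  { intros [_ H1]. apply (H1 (fun _ => 1) (fun _ => 0)); auto.
    - apply (b1_const X (fun _ => 0)); auto.
    - intro; ring. }
  exists (Mdef X P). split; [split; [exact MI|split; [exact Mpr|]]|split; [exact PsubM|]].
  - intros J [JB [J0 [JD JM]]] Jp HMJ f Jf. split; auto.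
    intros h p Bh Hp E. apply Jp.
    apply (ext_in J (fun x => h x * f x + p x)); auto.
  - intros M' [[MB [M0 [MD MM]]] [Mp Mmax]] PM' f.
    assert (Sub : forall g, M' g -> Mdef X P g).
    { intros g Hg. split; auto. intros h p Bh Hp E. apply Mp.
      apply (ext_in M' (fun x => h x * g x + p x)); auto. }
    split; [apply Sub|]. apply (Mmax (Mdef X P) MI Mpr Sub).
Qed.
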